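(* Let $X$ be a random variable taking values in $\mathbb{R}_+$, and let $\mathbf{J}\in\mathbb{C}^{n\times n}$ be a Jordan block with eigenvalue $\lambda$, $\Re(\lambda)>0$. For $j\in\{1,\dots,n\}$ let $Z_j\sim\mathrm{Erlang}(j,\Re(\lambda))$ be independent of $X$, and let $Z_0=0$. Then for each $j\in\{1,\dots,n\}$, $$\big|\boldsymbol{\mathcal{L}}_X(\mathbf{J})_{1,j}\big|\le\Re(\lambda)^{1-j}\max\big(\mathbb{P}(Z_j>X),\mathbb{P}(Z_{j-1}>X)\big)\le\Re(\lambda)^{1-j}.$$
   Context: $\boldsymbol{\mathcal{L}}_X(\mathbf{J})=\mathbb{E}[\exp(-\mathbf{J}X)]$ (entrywise expectation of the matrix exponential). A Jordan block with eigenvalue $\lambda$ has $\lambda$ on the diagonal, ones on the first superdiagonal and zeros elsewhere. Erlang$(j,\mu)$ is the distribution of a sum of $j$ i.i.d. exponential random variables with rate $\mu$. *)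

(* Defs.v *)
From HB Require Import structures.
From mathcomp Require Import all_boot all_order all_algebra.
From mathcomp Require Import all_classical all_reals all_analysis.
From mathcomp Require Import complex.
Set Implicit Arguments. Unset Strict Implicit. Unset Printing Implicit Defensive.
Import Order.TTheory GRing.Theory Num.Theory.
Import numFieldNormedType.Exports.
Local Open Scope classical_set_scope.
Local Open Scope ring_scope.
Local Open Scope complex_scope.

Definition jordan_block {R : realType} (n : nat) (lam : R[i]) : 'M[R[i]]_n :=
  \matrix_(i < n, j < n)
    (if i == j then lam else if j == i.+1 :> nat then 1 else 0).

(* Matrix exponential, entrywise the limit of the partial sums of the
   exponential series  sum_k A^k / k!  (real and imaginary parts taken
   separately; the series always converges). *)
Definition expm {R : realType} (n : nat) (A : 'M[R[i]]_n) : 'M[R[i]]_n :=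
  \matrix_(i < n, j < n)
    Complex
      (lim ((fun N : nat => complex.Re ((\sum_(k < N) (k`!%:R)^-1 *: A ^+ k) i j)) @ \oo))
      (lim ((fun N : nat => complex.Im ((\sum_(k < N) (k`!%:R)^-1 *: A ^+ k) i j)) @ \oo)).

Definition cexpectation {d} {T : measurableType d} {R : realType}
  (P : probability T R) (f : T -> R[i]) : R[i] :=
  Complex (fine ('E_P[fun w => complex.Re (f w)])%E) (fine ('E_P[fun w => complex.Im (f w)])%E).

Definition mlaplace {d} {T : measurableType d} {R : realType}
  (P : probability T R) (X : T -> R) (n : nat) (J : 'M[R[i]]_n) : 'M[R[i]]_n :=
  \matrix_(i < n, j < n)
    cexpectation P (fun w => expm (- ((X w)%:C *: J)) i j).

Definition erlang_pdf {R : realType} (k : nat) (mu : R) (x : R) : R :=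
  if 0 <= x then mu ^+ k * x ^+ k.-1 * expR (- (mu * x)) / (k.-1)`!%:R else 0.

Definition is_erlang {d} {T : measurableType d} {R : realType}
  (P : probability T R) (Z : T -> R) (k : nat) (mu : R) : Prop :=
  forall A : set R, measurable A ->
    P (Z @^-1` A) = (\int[lebesgue_measure]_(x in A) (erlang_pdf k mu x)%:E)%E.

Definition indep_rv {d} {T : measurableType d} {R : realType}
  (P : probability T R) (X Y : T -> R) : Prop :=
  forall A B : set R, measurable A -> measurable B ->
    P (X @^-1` A `&` Y @^-1` B) = (P (X @^-1` A) * P (Y @^-1` B))%E.

(* Main.v *)
Require Import Defs.
Set Warnings "-all".
From HB Require Import structures.
From mathcomp Require Import all_boot all_order all_algebra.
From mathcomp Require Import all_classical all_reals all_analysis.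
From mathcomp Require Import measurable_realfun.
From mathcomp Require Import complex.
From mathcomp Require Import ring lra.
Set Implicit Arguments. Unset Strict Implicit. Unset Printing Implicit Defensive.
Import Order.TTheory GRing.Theory Num.Theory.
Import numFieldNormedType.Exports.
Local Open Scope classical_set_scope.
Local Open Scope ring_scope.
Local Open Scope complex_scope.

Section Eexp.
Variable F : numFieldType.
Definition Ex (a : F) (M : nat) : F := \sum_(m < M) a ^+ m / m`!%:R.

Lemma ExS a M : Ex a M.+1 = Ex a M + a ^+ M / M`!%:R.
Proof. by rewrite /Ex big_ord_recr. Qed.

Lemma fact_neq0 k : (k`!%:R : F) != 0.
Proof. by rewrite pnatr_eq0 -lt0n fact_gt0. Qed.

Lemma binV (M p : nat) : (p <= M)%N ->
  'C(M, p)%:R / M`!%:R = (p`!%:R)^-1 * ((M - p)`!%:R)^-1 :> F.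
Proof.
move=> pM; rewrite -(bin_fact pM) !natrM.
have h1 := fact_neq0 p; have h2 := fact_neq0 (M - p).
have h3 : ('C(M, p)%:R : F) != 0 by rewrite pnatr_eq0 -lt0n bin_gt0.
by field; rewrite h1 h2 h3.
Qed.

Definition T2 (a b : F) M := \sum_(p < M) (a ^+ p / p`!%:R) * Ex b (M - p).

Lemma T2E a b M : T2 a b M = Ex (a + b) M.
Proof.
elim: M => [|M IH]; first by rewrite /T2 /Ex !big_ord0.
rewrite ExS -IH /T2 big_ord_recr /= subSnn.
rewrite (eq_bigr (fun p : 'I_M => a ^+ p / p`!%:R * Ex b (M - p) +
     a ^+ p / p`!%:R * (b ^+ (M - p) / (M - p)`!%:R))); last first.
  by move=> p _; rewrite subSn ?ExS ?mulrDr //; exact: ltnW.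
rewrite big_split /= -!addrA; congr (_ + _).
rewrite [a + b]addrC exprDn mulr_suml big_ord_recr /= subnn binn expr0 mulr1n.
rewrite /Ex big_ord1 expr0 fact0 divr1 mulr1 mul1r; congr (_ + _).
apply: eq_bigr => p _.
rewrite -(mulr_natr (b ^+ _ * _)) -[X in _ = X]mulrA binV; last exact: ltnW.
by ring.
Qed.

Lemma Ex_mul_sub a b M : Ex a M * Ex b M - Ex (a + b) M =
  \sum_(p < M) (a ^+ p / p`!%:R) * (Ex b M - Ex b (M - p)).
Proof.
rewrite -T2E /T2 mulr_suml -sumrB; apply: eq_bigr => p _; by rewrite mulrBr.
Qed.

Lemma Ex_diff b M p : (p <= M)%N ->
  Ex b M - Ex b (M - p) = \sum_(M - p <= q < M) b ^+ q / q`!%:R.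
Proof.
move=> pM; rewrite /Ex -!(big_mkord xpredT (fun q => b ^+ q / q`!%:R)).
rewrite (@big_cat_nat _ _ _ (M - p) 0 M) //=; last exact: leq_subr.
by rewrite addrAC subrr add0r.
Qed.

Lemma norm_term (a : F) q : `|a ^+ q / q`!%:R| = `|a| ^+ q / q`!%:R :> F.
Proof. by rewrite normrM normrX normfV normr_nat. Qed.

Lemma Ex_mul_bound a b M :
  `|Ex a M * Ex b M - Ex (a + b) M| <=
  Ex `|a| M * Ex `|b| M - Ex (`|a| + `|b|) M.
Proof.
rewrite !Ex_mul_sub; apply: (le_trans (ler_norm_sum _ _ _)).
apply: ler_sum => p _.
rewrite normrM norm_term; apply: ler_wpM2l.
  by apply: divr_ge0; [exact: exprn_ge0 | exact: ler0n].
rewrite !Ex_diff; last 2 first.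
  exact: ltnW. exact: ltnW.
apply: (le_trans (ler_norm_sum _ _ _)).
by apply: ler_sum => q _; rewrite norm_term.
Qed.

End Eexp.

Section Cplx.
Variable R : realType.

Lemma Ex_real (r : R) M : Ex (r%:C) M = (Ex r M)%:C.
Proof.
rewrite /Ex rmorph_sum; apply: eq_bigr => m _.
by rewrite rmorphM rmorphXn fmorphV rmorph_nat.
Qed.

Lemma Ex_series (r : R) M : Ex r M = series (exp_coeff r) M.
Proof.
rewrite /series /= big_mkord; apply: eq_bigr => m _.
by rewrite exp_coeffE mulrC.
Qed.

Lemma Ex_cvg (r : R) : Ex r M @[M --> \oo] --> expR r.
Proof.
rewrite (_ : (fun M => Ex r M) = series (exp_coeff r)); last first.
  by apply/funext => M; rewrite Ex_series.
exact: (is_cvg_series_exp_coeff r).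
Qed.

End Cplx.

Section Cplx2.
Variable R : realType.

Lemma i_pow m : ('i%C : R[i]) ^+ m =
  Complex ((~~ odd m)%:R * (-1) ^+ m./2) ((odd m)%:R * (-1) ^+ m.-1./2).
Proof.
elim: m => [|m IH].
  by apply/eqP; rewrite eq_complex /= expr0 mulr1 mul0r !eqxx.
rewrite exprSr IH; apply/eqP; rewrite eq_complex /=.
case: (boolP (odd m)) => om /=.
  have [k Hk] : exists k, m = k.*2.+1.
    by exists m./2; rewrite -[in LHS](odd_double_half m) om add1n.
  rewrite Hk /= doubleK exprS.
  by rewrite ?mul0r ?mul1r ?mulr0 ?mulr1 ?sub0r ?addr0 ?mulN1r ?eqxx.
have [k Hk] : exists k, m = k.*2.
  by exists m./2; rewrite -[in LHS](odd_double_half m) (negbTE om) add0n.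
rewrite Hk /= ?uphalf_half ?odd_double /= ?doubleK.
by rewrite ?mul0r ?mul1r ?mulr0 ?mulr1 ?subr0 ?add0r ?addr0 ?eqxx.
Qed.

Lemma ReMr (z : R[i]) (r : R) : complex.Re (z * r%:C) = complex.Re z * r.
Proof. by case: z => a b /=; rewrite mulr0 subr0. Qed.

Lemma ImMr (z : R[i]) (r : R) : complex.Im (z * r%:C) = complex.Im z * r.
Proof. by case: z => a b /=; rewrite mulr0 add0r. Qed.

Lemma term_i (v : R) m : (Complex 0 v) ^+ m / m`!%:R =
  ('i%C : R[i]) ^+ m * (v ^+ m / m`!%:R)%:C.
Proof.
have -> : Complex 0 v = 'i%C * v%:C.
  by apply/eqP; rewrite eq_complex /= ?mul0r ?mul1r ?subr0 ?addr0 ?add0r ?eqxx.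
by rewrite exprMn rmorphM rmorphXn fmorphV rmorph_nat mulrA.
Qed.

Lemma Re_Ex_i (v : R) M : complex.Re (Ex (Complex 0 v) M) = series (cos_coeff v) M.
Proof.
rewrite /Ex /series /= big_mkord raddf_sum; apply: eq_bigr => m _.
rewrite term_i /= ReMr i_pow /= cos_coeffE; ring.
Qed.

Lemma Im_Ex_i (v : R) M : complex.Im (Ex (Complex 0 v) M) = series (sin_coeff v) M.
Proof.
rewrite /Ex /series /= big_mkord raddf_sum; apply: eq_bigr => m _.
rewrite term_i /= ImMr i_pow /= sin_coeffE; ring.
Qed.

End Cplx2.

Section Cplx3.
Variable R : realType.

Lemma cvg_cos_series (v : R) : series (cos_coeff v) M @[M --> \oo] --> cos v.
Proof. rewrite cos.unlock /=; exact: is_cvg_series_cos_coeff. Qed.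

Lemma cvg_sin_series (v : R) : series (sin_coeff v) M @[M --> \oo] --> sin v.
Proof. rewrite sin.unlock /=; exact: is_cvg_series_sin_coeff. Qed.

Lemma norm_Re_le (w : R[i]) (d : R) : `|w| <= d%:C ->
  `|complex.Re w| <= d /\ `|complex.Im w| <= d.
Proof.
rewrite normc_def lecR => h; split; apply: le_trans h.
  rewrite -sqrtr_sqr; apply: ler_wsqrtr; rewrite lerDl; exact: sqr_ge0.
rewrite -sqrtr_sqr; apply: ler_wsqrtr; rewrite lerDr; exact: sqr_ge0.
Qed.

Lemma real_norm (z : R[i]) : exists r : R, `|z| = r%:C.
Proof. by rewrite normc_def; eexists. Qed.

Lemma cvg_to0_bound (e D : nat -> R) : (forall M, `|e M| <= D M) ->
  D M @[M --> \oo] --> 0 -> e M @[M --> \oo] --> 0.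
Proof.
move=> hb hD; apply: (@squeeze_cvgr _ _ _ _ (fun M => - D M) D).
- by near=> M; rewrite -ler_norml hb.
- by rewrite -oppr0; apply: cvgN.
- exact: hD.
Unshelve. all: end_near.
Qed.

Lemma cexp_cvg (u v : R) :
  complex.Re (Ex (Complex u v) M) @[M --> \oo] --> expR u * cos v /\
  complex.Im (Ex (Complex u v) M) @[M --> \oo] --> expR u * sin v.
Proof.
have Euv : Complex u v = u%:C + Complex 0 v.
  by apply/eqP; rewrite eq_complex /= addr0 add0r !eqxx.
have [al hal] := real_norm (u%:C : R[i]).
have [be hbe] := real_norm (Complex 0 v).
pose D M := Ex al M * Ex be M - Ex (al + be) M.
have hD : D M @[M --> \oo] --> 0.
  rewrite -(subrr (expR (al + be))); rewrite [X in _ --> X - _]expRD.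
  apply: cvgB; last exact: Ex_cvg.
  by apply: cvgM; exact: Ex_cvg.
have bnd M : `|Ex (u%:C) M * Ex (Complex 0 v) M - Ex (Complex u v) M| <= (D M)%:C.
  rewrite Euv; apply: le_trans (Ex_mul_bound _ _ _) _.
  by rewrite hal hbe -rmorphD !Ex_real -rmorphM -rmorphB.
pose dif M := Ex (u%:C) M * Ex (Complex 0 v) M - Ex (Complex u v) M.
have hE M : Ex (Complex u v) M = Ex (u%:C) M * Ex (Complex 0 v) M - dif M.
  by rewrite /dif opprB addrC subrK.
split.
- have -> : (fun M => complex.Re (Ex (Complex u v) M)) =
            (fun M => Ex u M * series (cos_coeff v) M - complex.Re (dif M)).
    apply/funext => M; rewrite hE raddfB /= Ex_real mulrC ReMr Re_Ex_i mulrC //.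
  rewrite -[X in _ --> X]subr0; apply: cvgB.
    by apply: cvgM; [exact: Ex_cvg | exact: cvg_cos_series].
  by apply: (cvg_to0_bound _ hD) => M; have [] := norm_Re_le (bnd M).
- have -> : (fun M => complex.Im (Ex (Complex u v) M)) =
            (fun M => Ex u M * series (sin_coeff v) M - complex.Im (dif M)).
    apply/funext => M; rewrite hE raddfB /= Ex_real mulrC ImMr Im_Ex_i mulrC //.
  rewrite -[X in _ --> X]subr0; apply: cvgB.
    by apply: cvgM; [exact: Ex_cvg | exact: cvg_sin_series].
  by apply: (cvg_to0_bound _ hD) => M; have [] := norm_Re_le (bnd M).
Qed.

End Cplx3.

Section Jordan.
Variable R : realType.
Local Open Scope complex_scope.

Lemma jordanE (n : nat) (lam : R[i]) (i j : 'I_n) : jordan_block n lam i j =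
  (if i == j then lam else if val j == (val i).+1 then 1 else 0).
Proof. by rewrite mxE. Qed.

Lemma jordan_pow (n : nat) (lam : R[i]) (r0 : 'I_n) : val r0 = 0%N ->
  forall m (j : 'I_n), (jordan_block n lam ^+ m) r0 j = lam ^+ (m - j) *+ 'C(m, j).
Proof.
move=> r00 m; elim: m => [|m IH] j.
  rewrite expr0 /= mxE bin0n.
  have -> : (r0 == j) = (val j == 0%N) by rewrite -val_eqE r00 eq_sym.
  by case: (val j == 0%N).
rewrite exprSr -mulmxE mxE.
rewrite (bigD1 j) //= jordanE eqxx IH.
case: j => [[|j'] hj] /=.
  rewrite big1; last first.
    by move=> k /= hk; rewrite jordanE (negbTE hk) /= mulr0.
  by rewrite addr0 !subn0 !bin0 !mulr1n exprSr.
have hj' : (j' < n)%N by exact: ltnW.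
rewrite (bigD1 (Ordinal hj')) /=; last by rewrite -val_eqE /= neq_ltn ltnSn.
rewrite jordanE /= -val_eqE /= eqn_leq ltnn /= eqxx IH andbF /= mulr1.
rewrite big1; last first.
  move=> k /andP[hk1 hk2]; rewrite jordanE (negbTE hk1).
  have -> : (j'.+1 == (val k).+1) = false.
    by rewrite eqSS; apply/negP => /eqP hk; move: hk2; rewrite -val_eqE /= hk eqxx.
  by rewrite mulr0.
rewrite addr0 binS mulrnDr subSS; congr (_ + _).
case: (leqP j'.+1 m) => hm.
  by rewrite mulrnAl -exprSr -subSn // subSS.
by rewrite bin_small // !mulr0n mul0r.
Qed.

End Jordan.

Section Psum.
Variable R : realType.
Local Open Scope complex_scope.

Lemma scale_exp n (a : R[i]) (A : 'M[R[i]]_n) k : (a *: A) ^+ k = a ^+ k *: A ^+ k.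
Proof.
elim: k => [|k IH]; first by rewrite !expr0 scale1r.
by rewrite !exprSr IH -!mulmxE -scalemxAl -scalemxAr scalerA.
Qed.

Lemma psum_entry (n : nat) (lam : R[i]) (r0 j : 'I_n) (x : R) N :
  val r0 = 0%N -> (j <= N)%N ->
  (\sum_(k < N) (k`!%:R)^-1 *: (- (x%:C *: jordan_block n lam)) ^+ k) r0 j
  = ((- x) ^+ j / j`!%:R)%:C * Ex ((- x)%:C * lam) (N - j).
Proof.
move=> r00 jN.
rewrite summxE.
under eq_bigr do rewrite -scaleNr scale_exp !mxE jordan_pow //.
rewrite -(big_mkord xpredT (fun k => (k`!%:R)^-1 * ((- x%:C) ^+ k * (lam ^+ (k - j) *+ 'C(k, j))))).
rewrite (@big_cat_nat _ _ _ j 0 N) //=.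
rewrite big_nat_cond big1 ?add0r; last first.
  by move=> k /andP[/andP[_ hk] _]; rewrite bin_small // mulr0n !mulr0.
rewrite -{1}(add0n j) big_addn big_mkord /Ex mulr_sumr; apply: eq_bigr => i _.
rewrite addnK.
have hb := @bin_fact (i + j) j (leq_addl _ _).
rewrite addnK in hb.
have -> : (((- x) ^+ j / j`!%:R)%:C : R[i]) = (- x%:C) ^+ j / j`!%:R.
  by rewrite rmorphM rmorphXn rmorphN fmorphV rmorph_nat.
have -> : ((- x)%:C : R[i]) = - x%:C by rewrite rmorphN.
rewrite -hb natrM natrM exprD exprMn -(mulr_natr (lam ^+ i)).
have h1 := fact_neq0 R[i] i; have h2 := fact_neq0 R[i] j.
have h3 : ('C(i + j, j)%:R : R[i]) != 0 by rewrite pnatr_eq0 -lt0n bin_gt0 leq_addl.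
by field; rewrite h1 h2 h3.
Qed.

End Psum.

Section Expm.
Variable R : realType.
Local Open Scope complex_scope.

Definition cfac (j : nat) (x : R) : R := (- x) ^+ j / j`!%:R.
Definition fre (lam : R[i]) (j : nat) (x : R) : R :=
  cfac j x * (expR (- x * complex.Re lam) * cos (- x * complex.Im lam)).
Definition fim (lam : R[i]) (j : nat) (x : R) : R :=
  cfac j x * (expR (- x * complex.Re lam) * sin (- x * complex.Im lam)).

Lemma zE (x : R) (lam : R[i]) :
  (- x)%:C * lam = Complex (- x * complex.Re lam) (- x * complex.Im lam).
Proof. by case: lam => a b; apply/eqP; rewrite eq_complex /= !mul0r subr0 addr0 !eqxx. Qed.

Lemma expm_entry (n : nat) (lam : R[i]) (r0 j : 'I_n) (x : R) : val r0 = 0%N ->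
  expm (- (x%:C *: jordan_block n lam)) r0 j = Complex (fre lam j x) (fim lam j x).
Proof.
move=> r00; rewrite /expm mxE; congr Complex; apply: cvg_lim => //.
- rewrite -(cvg_shiftn j) /=.
  have -> : (fun n0 => complex.Re ((\sum_(k < n0 + j) (k`!%:R)^-1 *:
       (- (x%:C *: jordan_block n lam)) ^+ k) r0 j)) =
       (fun n0 => cfac j x * complex.Re (Ex ((- x)%:C * lam) n0)).
    apply/funext => n0; rewrite psum_entry ?leq_addl // addnK mulrC ReMr mulrC //.
  rewrite /fre; apply: cvgM; first exact: cvg_cst.
  by rewrite zE; have [] := cexp_cvg (- x * complex.Re lam) (- x * complex.Im lam).
- rewrite -(cvg_shiftn j) /=.
  have -> : (fun n0 => complex.Im ((\sum_(k < n0 + j) (k`!%:R)^-1 *: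
       (- (x%:C *: jordan_block n lam)) ^+ k) r0 j)) =
       (fun n0 => cfac j x * complex.Im (Ex ((- x)%:C * lam) n0)).
    apply/funext => n0; rewrite psum_entry ?leq_addl // addnK mulrC ImMr mulrC //.
  rewrite /fim; apply: cvgM; first exact: cvg_cst.
  by rewrite zE; have [] := cexp_cvg (- x * complex.Re lam) (- x * complex.Im lam).
Qed.

End Expm.

Section Pointwise.
Variable R : realType.
Local Open Scope complex_scope.

Definition hfun (a : R) (k : nat) (x : R) : R := x ^+ k / k`!%:R * expR (- x * a).

Lemma hfun_ge0 a k x : 0 <= x -> 0 <= hfun a k x.
Proof.
move=> x0; rewrite /hfun; apply: mulr_ge0; last exact: expR_ge0.
by apply: divr_ge0; [exact: exprn_ge0 | exact: ler0n].
Qed.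

Lemma hfun_le a k x : 0 < a -> 0 <= x -> hfun a k x <= a ^- k.
Proof.
move=> a0 x0.
have ak0 : 0 < a ^+ k by exact: exprn_gt0.
rewrite -[X in _ <= X]mul1r ler_pdivlMr // /hfun.
have key : (a * x) ^+ k / k`!%:R <= expR (x * a).
  case: k {ak0} => [|k].
    by rewrite expr0 fact0 divr1 -expR0 ler_expR; apply: mulr_ge0 => //; exact: ltW.
  apply: le_trans (expR_ge1Dxn k _) => //; last by apply: mulr_ge0 => //; exact: ltW.
  by rewrite (mulrC x a) ler_wpDl.
have -> : x ^+ k / k`!%:R * expR (- x * a) * a ^+ k =
    ((a * x) ^+ k / k`!%:R) * expR (- (x * a)) by rewrite exprMn mulNr; ring.
rewrite -[X in _ <= X](expRxMexpNx_1 (x * a)); apply: ler_wpM2r key; exact: expR_ge0.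
Qed.

Lemma fre_E (lam : R[i]) j x : fre lam j x =
  (cfac j x * expR (- x * complex.Re lam)) * cos (- x * complex.Im lam).
Proof. by rewrite /fre mulrA. Qed.

Lemma fim_E (lam : R[i]) j x : fim lam j x =
  (cfac j x * expR (- x * complex.Re lam)) * sin (- x * complex.Im lam).
Proof. by rewrite /fim mulrA. Qed.

Lemma normK (lam : R[i]) j x : 0 <= x ->
  `|cfac j x * expR (- x * complex.Re lam)| = hfun (complex.Re lam) j x.
Proof.
move=> x0; rewrite /cfac /hfun normrM (ger0_norm (expR_ge0 _)) normrM normrX normrN.
by rewrite (ger0_norm x0) normfV normr_nat.
Qed.

Lemma fre_bound (lam : R[i]) j x : 0 <= x -> `|fre lam j x| <= hfun (complex.Re lam) j x.
Proof.
move=> x0; rewrite fre_E normrM normK //.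
rewrite -[X in _ <= X]mulr1; apply: ler_wpM2l; [exact: hfun_ge0 | exact: cos_max].
Qed.

Lemma fim_bound (lam : R[i]) j x : 0 <= x -> `|fim lam j x| <= hfun (complex.Re lam) j x.
Proof.
move=> x0; rewrite fim_E normrM normK //.
rewrite -[X in _ <= X]mulr1; apply: ler_wpM2l; [exact: hfun_ge0 | exact: sin_max].
Qed.

Lemma rot_bound (lam : R[i]) j x c s : 0 <= x -> c ^+ 2 + s ^+ 2 = 1 ->
  c * fre lam j x + s * fim lam j x <= hfun (complex.Re lam) j x.
Proof.
move=> x0 cs; rewrite fre_E fim_E.
set K := cfac j x * _; set co := cos _; set si := sin _.
have cs2 : co ^+ 2 + si ^+ 2 = 1 by exact: cos2Dsin2.
have y1 : `|c * co + s * si| <= 1.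
  have h : (c * co + s * si) ^+ 2 <= 1.
    have -> : 1 = (c ^+ 2 + s ^+ 2) * (co ^+ 2 + si ^+ 2) by rewrite cs cs2 mulr1.
    rewrite -subr_ge0.
    have -> : (c ^+ 2 + s ^+ 2) * (co ^+ 2 + si ^+ 2) - (c * co + s * si) ^+ 2 =
      (c * si - s * co) ^+ 2 by ring.
    exact: sqr_ge0.
  have hn : `|c * co + s * si| ^+ 2 <= 1 by rewrite real_normK ?num_real.
  case: (leP `|c * co + s * si| 1) => // hlt.
  have : 1 < `|c * co + s * si| ^+ 2 by rewrite expr_gt1 // ltW // (lt_trans ltr01 hlt).
  by rewrite ltNge hn.
have -> : c * (K * co) + s * (K * si) = K * (c * co + s * si) by ring.
apply: le_trans (ler_norm _) _.
rewrite normrM normK // -[X in _ <= X]mulr1; apply: ler_wpM2l => //; exact: hfun_ge0.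
Qed.

End Pointwise.

Section ExpTail.
Variable R : realType.

Lemma exp_tail (a x : R) : 0 < a -> 0 <= x ->
  (\int[lebesgue_measure]_(y in `]x, +oo[) (exponential_pdf a y)%:E = (expR (- a * x))%:E)%E.
Proof.
move=> a0 x0.
have mE : measurable_fun [set: R] (fun y : R => (exponential_pdf a y)%:E).
  by apply/measurable_EFinP; exact: measurable_exponential_pdf.
rewrite integral_itv_obnd_cbnd; last exact: measurable_funTS.
have cexpNM : continuous (fun z : R => expR (- a * z)).
  move=> z; apply: continuous_comp; last exact: continuous_expR.
  by apply: continuousM => //; apply: (@continuousN _ R^o); exact: cst_continuous.
rewrite (@ge0_continuous_FTC2y _ _ (fun y => - expR (- a * y)) _ 0).
- by rewrite sub0e EFinN oppeK.
- by move=> y _; apply: exponential_pdf_ge0; exact: ltW.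
- apply: (@continuous_subspaceW R^o _ _ [set` `[0, +oo[%R]).
    by apply: subset_itvr; rewrite bnd_simp.
  exact: within_continuous_exponential_pdf.
- rewrite -oppr0; apply: cvgN.
  rewrite (_ : (fun y => expR (- a * y)) =
               (fun z => expR (- z)) \o (fun z => a * z)); last first.
    by apply: eq_fun => y; rewrite mulNr.
  apply: (@cvg_comp _ _ _ _ _ _ (pinfty_nbhs R)); last exact: cvgr_expR.
  exact: gt0_cvgMry.
- by move=> y _; exact: ex_derive.
- by apply: cvgN; apply/cvg_at_right_filter; exact: cexpNM.
- move=> y; rewrite in_itv/= andbT => xy.
  by apply: derive1_exponential_pdf; rewrite in_itv/= andbT (le_lt_trans x0 xy).
Qed.

End ExpTail.
Section ErlTail.
Variable R : realType.

Lemma erlang_tail (a x : R) k : 0 < a -> 0 <= x ->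
  ((a ^+ k * hfun a k x)%:E <=
   \int[lebesgue_measure]_(y in `]x, +oo[) (erlang_pdf k.+1 a y)%:E)%E.
Proof.
move=> a0 x0.
set c := a ^+ k * x ^+ k / k`!%:R.
have c0 : 0 <= c.
  by rewrite /c; apply: divr_ge0; [apply: mulr_ge0; apply: exprn_ge0 => //; exact: ltW | exact: ler0n].
have -> : a ^+ k * hfun a k x = c * expR (- a * x).
  by rewrite /hfun /c !mulNr (mulrC x a); ring.
rewrite EFinM -exp_tail // -ge0_integralZl //; last 2 first.
- by apply/measurable_funTS/measurableT_comp => //; exact: measurable_exponential_pdf.
- by move=> y _; rewrite lee_fin; apply: exponential_pdf_ge0; exact: ltW.
apply: ge0_le_integral => //.
- move=> y _; rewrite -EFinM lee_fin; apply: mulr_ge0 => //.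
  by apply: exponential_pdf_ge0; exact: ltW.
- apply: measurable_funTS => /=.
  apply/measurable_EFinP; apply: measurable_funM; first exact: measurable_cst.
  exact: measurable_exponential_pdf.
- pose g := fun y : R => (a ^+ k.+1 * y ^+ k * expR (- (a * y)) / k`!%:R)%:E.
  apply: (eq_measurable_fun g).
    move=> y; rewrite inE /= in_itv /= andbT => xy.
    by rewrite /g /erlang_pdf ifT //= (le_trans x0 (ltW xy)).
  apply: measurable_funTS; apply/measurable_EFinP => /=.
  apply: measurable_funM; last exact: measurable_cst.
  apply: measurable_funM.
    apply: measurable_funM; first exact: measurable_cst.
    exact: measurable_funX.
  apply: measurableT_comp; first exact: measurable_expR.
  apply: measurable_funN; apply: measurable_funM => //; exact: measurable_cst.
- move=> y; rewrite /= in_itv /= andbT => xy.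
  have y0 : 0 <= y by exact: (le_trans x0 (ltW xy)).
  rewrite /erlang_pdf ifT //= -EFinM lee_fin exponential_pdfE // /c.
  have hxy : x ^+ k <= y ^+ k by rewrite lerXn2r // ?nnegrE // ltW.
  have e0 := expR_ge0 (- (a * y)).
  have f0 : 0 < (k`!%:R : R)^-1 by rewrite invr_gt0 ltr0n fact_gt0.
  rewrite mulNr exprS.
  have ak : 0 <= a ^+ k by apply: exprn_ge0; exact: ltW.
  set K := a * a ^+ k * expR (- (a * y)) / k`!%:R.
  have -> : a ^+ k * x ^+ k / k`!%:R * (a * expR (- (a * y))) = K * x ^+ k by rewrite /K; ring.
  have -> : a * a ^+ k * y ^+ k * expR (- (a * y)) / k`!%:R = K * y ^+ k by rewrite /K; ring.
  apply: ler_wpM2l hxy.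
  rewrite /K; apply: mulr_ge0; last exact: ltW.
  by apply: mulr_ge0 => //; apply: mulr_ge0 => //; exact: ltW.
Qed.


End ErlTail.
Section Pair.
Context d (T : measurableType d) (R : realType) (P : probability T R)
  (X Z : {RV P >-> R}).

Definition pairXZ : T -> (R * R)%type := fun w => (X w, Z w).

Lemma mpairXZ : measurable_fun setT pairXZ.
Proof. exact: measurable_fun_pair. Qed.

HB.instance Definition _ := isMeasurableFun.Build _ _ _ _ pairXZ mpairXZ.

End Pair.

Section Indep.
Context d (T : measurableType d) (R : realType) (P : probability T R).

Lemma measurable_ltS : measurable [set p : (R * R)%type | p.1 < p.2].
Proof.
have h : measurable_fun setT (fun p : (R * R)%type => p.1 < p.2).
  by apply: measurable_fun_ltr; [exact: measurable_fst | exact: measurable_snd].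
have := h measurableT [set true] I; rewrite setTI.
by congr measurable; apply/funext => p /=; apply/propext; split => [->|].
Qed.

Lemma indep_lt (X Z : {RV P >-> R}) : indep_rv P X Z ->
  P [set w | X w < Z w] =
  (\int[P]_w (distribution P Z [set y | (X w < y)%R]))%E.
Proof.
move=> hind.
set S := [set p : (R * R)%type | p.1 < p.2].
have -> : [set w | X w < Z w] = pairXZ X Z @^-1` S by [].
transitivity (distribution P (pairXZ X Z) S) => //.
rewrite -(@product_measure_unique _ _ _ _ _ (distribution P X) (distribution P Z)
  (distribution P (pairXZ X Z)) _ S measurable_ltS); last first.
  move=> A B mA mB; rewrite /distribution /pushforward /=.
  by rewrite -hind.
rewrite /product_measure1 /=.
rewrite (ge0_integral_distribution (P := P) X (f := fun x => distribution P Z (xsection S x))).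
- apply: eq_integral => w _ /=; congr (distribution P Z _).
  by apply/funext => y; rewrite /xsection /= in_setE.
- exact: measurable_fun_xsection measurable_ltS.
- by move=> y; exact: measure_ge0.
Qed.


End Indep.
Section Meas.
Variable R : realType.

Lemma measurable_cfac j : measurable_fun [set: R] (cfac j).
Proof.
apply: measurable_funM; last exact: measurable_cst.
apply: measurable_funX; apply: measurable_funN; exact: measurable_id.
Qed.

Lemma measurable_expl (c : R) : measurable_fun [set: R] (fun x : R => expR (- x * c)).
Proof.
apply: measurableT_comp; first exact: measurable_expR.
apply: measurable_funM; last exact: measurable_cst.
apply: measurable_funN; exact: measurable_id.
Qed.

Lemma measurable_trig (f : R -> R) (c : R) : continuous f ->
  measurable_fun [set: R] (fun x : R => f (- x * c)).
Proof.
move=> cf; apply: measurableT_comp; first exact: continuous_measurable_fun.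
apply: measurable_funM; last exact: measurable_cst.
apply: measurable_funN; exact: measurable_id.
Qed.

Lemma measurable_fre (lam : R[i]) j : measurable_fun [set: R] (fre lam j).
Proof.
apply: measurable_funM; first exact: measurable_cfac.
apply: measurable_funM; first exact: measurable_expl.
apply: measurable_trig; exact: continuous_cos.
Qed.

Lemma measurable_fim (lam : R[i]) j : measurable_fun [set: R] (fim lam j).
Proof.
apply: measurable_funM; first exact: measurable_cfac.
apply: measurable_funM; first exact: measurable_expl.
apply: measurable_trig; exact: continuous_sin.
Qed.

Lemma measurable_hfun a k : measurable_fun [set: R] (hfun a k).
Proof.
apply: measurable_funM; last exact: measurable_expl.
apply: measurable_funM; last exact: measurable_cst.
apply: measurable_funX; exact: measurable_id.
Qed.

End Meas.

Section Lower.
Context d (T : measurableType d) (R : realType) (P : probability T R).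

Lemma prob_lower (X Z : {RV P >-> R}) (a : R) k : 0 < a ->
  (forall w, 0 <= X w) -> is_erlang P Z k.+1 a -> indep_rv P X Z ->
  (\int[P]_w ((a ^+ k * hfun a k (X w))%:E) <= P [set w | (X w < Z w)%R])%E.
Proof.
move=> a0 X0 herl hind; rewrite indep_lt //.
have setE x : [set y : R | x < y] = [set` `]x, +oo[] .
  by apply/funext => y; rewrite /= in_itv /= andbT.
apply: ge0_le_integral => //.
- move=> w _; rewrite lee_fin; apply: mulr_ge0; last exact: hfun_ge0.
  by apply: exprn_ge0; exact: ltW.
- apply/measurable_EFinP; apply: measurable_funM; first exact: measurable_cst.
  apply: measurableT_comp; first exact: measurable_hfun.
  exact: measurable_funPT.
- have mg : measurable_fun setT (fun x : R => distribution P Z [set y : R | x < y]).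
    have -> : (fun x : R => distribution P Z [set y : R | x < y]) =
      (fun x : R => distribution P Z (xsection [set p : (R * R)%type | p.1 < p.2] x)).
      by apply/funext => x; congr (distribution P Z _); apply/funext => y; rewrite /xsection /= in_setE.
    exact: (measurable_fun_xsection (distribution P Z) (@measurable_ltS R)).
  exact: (measurableT_comp mg (measurable_funPT X)).
- move=> w _; rewrite setE /distribution /pushforward herl; last exact: measurable_itv.
  exact: erlang_tail.
Qed.

End Lower.
Section Final.
Context d (T : measurableType d) (R : realType) (P : probability T R).

Lemma measurable_XltZ (X Z : {RV P >-> R}) : measurable [set w | X w < Z w].
Proof.
have h : measurable_fun setT (fun w => X w < Z w).
  by apply: measurable_fun_ltr; exact: measurable_funPT.
have := h measurableT [set true] I; rewrite setTI.
by congr measurable; apply/funext => p /=; apply/propext; split => [->|].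
Qed.

Lemma fine_prob01 (X Z : {RV P >-> R}) :
  0 <= fine (P [set w | X w < Z w]) <= 1.
Proof.
have mS := measurable_XltZ X Z.
apply/andP; split; first exact/fine_ge0/measure_ge0.
have h1 : P [set w | X w < Z w] \is a fin_num.
  by rewrite ge0_fin_numE ?measure_ge0 // (le_lt_trans (probability_le1 P mS)) // ltry.
by rewrite -lee_fin fineK // probability_le1.
Qed.

Lemma bnd_int (f : T -> R) M : measurable_fun setT f -> (forall w, `|f w| <= M) ->
  P.-integrable setT (EFin \o f).
Proof.
move=> mf hM; apply/integrableP; split; first exact/measurable_EFinP.
apply: (@le_lt_trans _ _ (\int[P]_w (cst M%:E) w)%E).
  apply: ge0_le_integral => //.
  - apply/measurable_EFinP; apply: measurableT_comp => //; exact: measurable_normr.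
  - by move=> w _; rewrite /= lee_fin.
rewrite integral_cst //.
have h1 : (P : {measure set T -> \bar R}) [set: T] = 1%E by exact: probability_setT.
rewrite h1.
by rewrite mule1 ltry.
Qed.

End Final.
Unset Implicit Arguments.

Theorem lemma3 (R : realType) (d : measure_display) (T : measurableType d)
  (P : probability T R) (X : {RV P >-> R}) (Z : nat -> {RV P >-> R})
  (n : nat) (lam : R[i]) :
  (forall w, 0 <= X w) ->
  0 < complex.Re lam ->
  (forall w, Z 0%N w = 0) ->
  (forall j : nat, (1 <= j <= n)%N ->
     is_erlang P (Z j) j (complex.Re lam) /\ indep_rv P X (Z j)) ->
  forall (r0 j : 'I_n), val r0 = 0%N ->
    let L := mlaplace P X (jordan_block n lam) r0 j in
    let b := (complex.Re lam) ^- j * Num.max (fine (P [set w | X w < Z j.+1 w]))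
                                       (fine (P [set w | X w < Z j w])) in
    `|L| <= b%:C /\ b <= (complex.Re lam) ^- j.
Proof.
move=> X0 a0 Z0 hZ r0 j r00 L b.
set a := complex.Re lam.
set k : nat := val j.
have [herl hind] : is_erlang P (Z k.+1) k.+1 a /\ indep_rv P X (Z k.+1).
  by apply: hZ; rewrite /k ltn_ord.
have [p1a p1b] := andP (fine_prob01 X (Z k.+1)).
have [p2a p2b] := andP (fine_prob01 X (Z k)).
have ak0 : 0 < a ^+ k by exact: exprn_gt0.
have ainv0 : 0 < a ^- k by rewrite invr_gt0.
have hb1 : b <= a ^- k.
  rewrite /b -[X in _ <= X]mulr1; apply: ler_wpM2l; first exact: ltW.
  by rewrite ge_max p1b p2b.
split => //.
have mfr : measurable_fun setT (fun w => fre lam k (X w)).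
  exact: (measurableT_comp (measurable_fre lam k) (measurable_funPT X)).
have mfi : measurable_fun setT (fun w => fim lam k (X w)).
  exact: (measurableT_comp (measurable_fim lam k) (measurable_funPT X)).
have mh : measurable_fun setT (fun w => hfun a k (X w)).
  exact: (measurableT_comp (measurable_hfun a k) (measurable_funPT X)).
have hle w : hfun a k (X w) <= a ^- k by exact: hfun_le.
have ir : P.-integrable setT (EFin \o (fun w => fre lam k (X w))).
  apply: (@bnd_int _ _ _ P _ (a ^- k)) => // w; exact: le_trans (fre_bound _ _ (X0 w)) (hle w).
have ii : P.-integrable setT (EFin \o (fun w => fim lam k (X w))).
  apply: (@bnd_int _ _ _ P _ (a ^- k)) => // w; exact: le_trans (fim_bound _ _ (X0 w)) (hle w).
have ih : P.-integrable setT (EFin \o (fun w => hfun a k (X w))).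
  apply: (@bnd_int _ _ _ P _ (a ^- k)) => // w.
  by rewrite ger0_norm ?hle //; exact: hfun_ge0.
set Ir := (\int[P]_w (fre lam k (X w))%:E)%E.
set Ii := (\int[P]_w (fim lam k (X w))%:E)%E.
set Ih := (\int[P]_w (hfun a k (X w))%:E)%E.
have IrE : Ir = (fine Ir)%:E by rewrite fineK //; exact: (integrable_fin_num _ ir).
have IiE : Ii = (fine Ii)%:E by rewrite fineK //; exact: (integrable_fin_num _ ii).
have IhE : Ih = (fine Ih)%:E by rewrite fineK //; exact: (integrable_fin_num _ ih).
set A := fine Ir; set B := fine Ii; set H := fine Ih.
have hL : L = Complex A B.
  rewrite /L /mlaplace mxE /cexpectation expectation.unlock.
  by congr Complex; congr fine; apply: eq_integral => w _; rewrite expm_entry.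
have H0 : 0 <= H.
  by apply: fine_ge0; apply: integral_ge0 => w _; rewrite lee_fin; exact: hfun_ge0.
have hH : H <= a ^- k * fine (P [set w | X w < Z k.+1 w]).
  have hl := prob_lower a0 X0 herl hind.
  have hfin : P [set w | X w < Z k.+1 w] \is a fin_num.
    rewrite ge0_fin_numE ?measure_ge0 //.
    exact: (le_lt_trans (probability_le1 P (measurable_XltZ X (Z k.+1)))) (ltry _).
  have e : (\int[P]_w (a ^+ k * hfun a k (X w))%:E)%E = ((a ^+ k * H)%:E)%E.
    transitivity (\int[P]_w ((a ^+ k)%:E * (hfun a k (X w))%:E))%E.
      by apply: eq_integral => w _; rewrite EFinM.
    by rewrite integralZl // -/Ih IhE.
  rewrite e -(fineK hfin) lee_fin in hl.
  by rewrite mulrC ler_pdivlMr // mulrC.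
have hH2 : a ^- k * fine (P [set w | X w < Z k.+1 w]) <= b.
  by rewrite /b; apply: ler_wpM2l; [exact: ltW | rewrite le_max lexx].
have hrho : Num.sqrt (A ^+ 2 + B ^+ 2) <= H.
  set rho := Num.sqrt _.
  have rho0 : 0 <= rho by exact: sqrtr_ge0.
  have [->|rhon0] := eqVneq rho 0; first exact: H0.
  have rhop : 0 < rho by rewrite lt_neqAle eq_sym rhon0 rho0.
  have rho2 : rho ^+ 2 = A ^+ 2 + B ^+ 2 by rewrite sqr_sqrtr // addr_ge0 // sqr_ge0.
  set c := A / rho; set s := B / rho.
  have cs : c ^+ 2 + s ^+ 2 = 1.
    rewrite /c /s !expr_div_n -mulrDl -rho2 divff //; exact: expf_neq0.
  have hint : (\int[P]_w ((c * fre lam k (X w) + s * fim lam k (X w))%:E) <= Ih)%E.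
    apply: le_integral => //.
    - have iF : P.-integrable setT (fun w => (c%:E * (fre lam k (X w))%:E + s%:E * (fim lam k (X w))%:E)%E).
        by apply: integrableD => //; exact: integrableZl.
      apply: (eq_integrable _ _ _ _ iF) => //.
    - by move=> w _; rewrite lee_fin; apply: rot_bound.
  have e : (\int[P]_w ((c * fre lam k (X w) + s * fim lam k (X w))%:E) =
            ((c * A + s * B)%:E))%E.
    transitivity (\int[P]_w (c%:E * (fre lam k (X w))%:E + s%:E * (fim lam k (X w))%:E))%E.
      by apply: eq_integral => w _; rewrite EFinD !EFinM.
    rewrite integralD //; [|exact: integrableZl|exact: integrableZl].
    by rewrite !integralZl // -/Ir -/Ii IrE IiE.
  rewrite e IhE lee_fin in hint.
  suff <- : c * A + s * B = rho by [].
  have -> : c * A + s * B = (A ^+ 2 + B ^+ 2) / rho by rewrite /c /s; ring.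
  by rewrite -rho2 expr2 mulfK.
rewrite hL normc_def /= lecR.
exact: le_trans hrho (le_trans hH hH2).
Qed.
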